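(* Let $A=\{0,1,2\}$ and let $T\colon A^4\to A$ be given by $T(1,1,2,2)=T(1,2,1,2)=1$ and $T(\mathbf{x})=0$ for all other $\mathbf{x}\in A^4$. For $a\in A$ let $z_a\colon A^2\to A$ be given by $z_a(2,2)=a$ and $z_a(x,y)=0$ otherwise, and for $a,b,c,d,e\in A$ let $f_{a,(b,c,d,e)}\colon A^2\to A$ be given by $f(0,2)=b$, $f(1,2)=c$, $f(2,0)=d$, $f(2,1)=e$, $f(2,2)=a$ and $f(x,y)=0$ for $(x,y)\in\{0,1\}^2$. Then $\{T\}^{*(2)}$ consists of exactly the following 65 functions: \[\{T\}^{*(2)}=\{e^2_1,e^2_2\}\ \dot\cup\ \{z_a : a\in\{0,1,2\}\}\ \dot\cup\ \bigcup_{c\in\{1,2\}}\{f_{a,\mathbf{x}} : a\in\{0,c\},\ \mathbf{x}\in\{0,c\}^4\setminus\{(0,0,0,0)\}\},\] where $e^2_1(x,y)=x$ and $e^2_2(x,y)=y$.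
   Context: An $m$-ary $g$ commutes with an $n$-ary $h$ if $g\bigl((h((x_{ij})_{j}))_{i}\bigr)=h\bigl((g((x_{ij})_{i}))_{j}\bigr)$ for all $(x_{ij})\in A^{m\times n}$. For a set $F$ of finitary operations on $A$, $F^*$ is the set of all finitary operations of positive arity commuting with every member of $F$, and $F^{*(2)}$ is the set of binary members of $F^*$. *)

(* Defs.v *)
From mathcomp Require Import all_boot.
Set Implicit Arguments. Unset Strict Implicit. Unset Printing Implicit Defensive.

Definition A := 'I_3.
Definition aA (k : nat) : A := @inord 2 k.

Definition op (n : nat) := {ffun 'I_n -> A} -> A.

Definition commutes (m n : nat) (g : op m) (h : op n) : Prop :=
  forall x : 'I_m -> 'I_n -> A,
    g [ffun i => h [ffun j => x i j]] = h [ffun j => g [ffun i => x i j]].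

Definition binop := {ffun A * A -> A}.
Definition op_of2 (g : binop) : op 2 := fun v => g (v ord0, v ord_max).

Definition T : op 4 := fun v =>
  let x i := val (v (@inord 3 i)) in
  if ((x 0, x 1, x 2, x 3) == (1, 1, 2, 2)) || ((x 0, x 1, x 2, x 3) == (1, 2, 1, 2))
  then aA 1 else aA 0.

Definition in_starT2 (g : binop) : Prop := commutes (op_of2 g) T.

Definition e21 : binop := [ffun p => p.1].
Definition e22 : binop := [ffun p => p.2].

Definition z (a : A) : binop :=
  [ffun p => if (val p.1 == 2) && (val p.2 == 2) then a else aA 0].

Definition f (a : A) (xs : {ffun 'I_4 -> A}) : binop :=
  [ffun p => let x := val p.1 in let y := val p.2 in
     if (x == 2) && (y == 2) then a
     else if (x == 0) && (y == 2) then xs (@inord 3 0)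
     else if (x == 1) && (y == 2) then xs (@inord 3 1)
     else if (x == 2) && (y == 0) then xs (@inord 3 2)
     else if (x == 2) && (y == 1) then xs (@inord 3 3)
     else aA 0].

Definition fam_f : {set binop} :=
  \bigcup_(c in [set aA 1; aA 2])
    [set f a xs | a in [set aA 0; c],
                  xs in [set xs : {ffun 'I_4 -> A} |
                          [forall i, xs i \in [set aA 0; c]] && (xs != [ffun=> aA 0])]].

Definition listed : {set binop} :=
  [set e21; e22] :|: [set z a | a : A] :|: fam_f.

(* Main.v *)
Require Import Defs.
From mathcomp Require Import all_boot.
Set Implicit Arguments. Unset Strict Implicit. Unset Printing Implicit Defensive.

Fixpoint allseqs (n : nat) : seq (seq nat) :=
  if n is m.+1 then [seq k :: s | k <- [:: 0; 1; 2], s <- allseqs m] else [:: [::]].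
Definition L9 := allseqs 9.
Definition Tnat (a b c d : nat) : nat :=
  match a, b, c, d with
  | 1, 1, 2, 2 => 1
  | 1, 2, 1, 2 => 1
  | _, _, _, _ => 0
  end.
Definition gt (t : seq nat) (x y : nat) := nth 0 t (3 * x + y).
Definition chkN t a0 a1 a2 a3 b0 b1 b2 b3 :=
  gt t (Tnat a0 a1 a2 a3) (Tnat b0 b1 b2 b3) ==
  Tnat (gt t a0 b0) (gt t a1 b1) (gt t a2 b2) (gt t a3 b3).
Definition l3 := [:: 0; 1; 2].
Definition CommB t :=
  all (fun a0 => all (fun a1 => all (fun a2 => all (fun a3 =>
  all (fun b0 => all (fun b1 => all (fun b2 => all (fun b3 =>
   chkN t a0 a1 a2 a3 b0 b1 b2 b3) l3) l3) l3) l3) l3) l3) l3) l3.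
Definition Qs : seq (seq nat) :=
 [:: [::2;2;2;2;1;1;2;2]; [::2;2;2;2;2;1;2;1]; [::2;2;2;2;0;0;2;2]; [::2;2;2;2;0;0;1;1];
     [::2;2;2;2;2;0;2;0]; [::2;2;2;2;1;0;1;0]; [::1;1;2;2;2;2;2;2]; [::1;1;2;2;2;2;1;1];
     [::1;1;2;2;2;2;0;0]; [::2;1;2;1;2;2;2;2]; [::2;1;2;1;1;2;1;2]; [::2;1;2;1;0;2;0;2];
     [::1;1;2;2;1;1;2;2]; [::1;1;2;2;1;2;1;2]; [::1;1;2;2;0;1;0;0]; [::0;0;2;2;2;2;2;2];
     [::0;0;2;2;2;2;1;1]; [::0;0;2;2;2;2;0;0]; [::0;0;1;1;2;2;2;2]; [::2;0;2;0;2;2;2;2];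
     [::2;0;2;0;1;2;1;2]; [::2;0;2;0;0;2;0;2]; [::1;0;1;0;2;2;2;2]; [::0;0;1;0;1;2;1;2]].
Definition chkQ t (q : seq nat) :=
  if q is [:: a0; a1; a2; a3; b0; b1; b2; b3] then chkN t a0 a1 a2 a3 b0 b1 b2 b3 else true.
Definition quick t := all (chkQ t) Qs.
Definition Lp t := t \in [:: [:: 0;0;0;1;1;1;2;2;2]; [:: 0;1;2;0;1;2;0;1;2]].
Definition Lz t := t \in [seq [:: 0;0;0;0;0;0;0;0;k] | k <- l3].
Definition Pc (c : nat) (l : seq nat) :=
  all (fun k => (k == 0) || (k == c)) l && has (fun k => k != 0) (behead l).
Definition Lf t :=
  if t is [:: t00; t01; t02; t10; t11; t12; t20; t21; t22] then
    [&& t00 == 0, t01 == 0, t10 == 0, t11 == 0 &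
        Pc 1 [:: t22; t02; t12; t20; t21] || Pc 2 [:: t22; t02; t12; t20; t21]]
  else false.
Definition Lst t := [|| Lp t, Lz t | Lf t].

Lemma big : all (fun t => if quick t then CommB t == Lst t else ~~ Lst t) L9.
Proof. vm_compute. reflexivity. Qed.
Lemma cnts : [/\ count Lp L9 = 2, count Lz L9 = 3, count Lf L9 = 60 & count Lst L9 = 65].
Proof. vm_compute. split; reflexivity. Qed.
Lemma disj : all (fun t => ~~ (Lp t && Lz t) && ~~ ((Lp t || Lz t) && Lf t)) L9.
Proof. vm_compute. reflexivity. Qed.

Lemma uniq_allseqs n : uniq (allseqs n).
Proof.
elim: n => [//|n IH].
apply: (@allpairs_uniq _ _ _ (fun k s => k :: s) [:: 0;1;2] (allseqs n) isT IH).
move=> [a s] [b t] _ _. rewrite /uncurry /=. by case=> -> ->.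
Qed.
Lemma allseqsS n : allseqs n.+1 = [seq k :: s | k <- [:: 0;1;2], s <- allseqs n].
Proof. by []. Qed.
Lemma mem_allseqs n s : (s \in allseqs n) = (size s == n) && all (fun k => k \in [:: 0;1;2]) s.
Proof.
case: n => [|n]; first by case: s.
elim: n s => [|n IH] [|k s]; rewrite allseqsS.
- by apply/allpairsP => -[[a t] [] /= _ _].
- apply/allpairsP/idP => [[[a t] [/= Ha Ht [-> ->]]]|].
    by move: Ht Ha; case: t => //= _ ->.
  move=> /= /andP[Hn /andP[Hk Hs]]; exists (k, s) => /=; split => //.
  by case: s Hn {Hs}.
- by apply/allpairsP => -[[a t] [] /= _ _].
- apply/allpairsP/idP => [[[a t] [/= Ha Ht [-> ->]]]|].
    by move: Ht; rewrite IH /= eqSS Ha /= => /andP[-> ->].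
  rewrite /= eqSS => /andP[Hn /andP[Hk Hs]]; exists (k, s) => /=; split => //.
  by rewrite IH Hn Hs.
Qed.

Definition o0 : A := @Ordinal 3 0 isT.
Definition o1 : A := @Ordinal 3 1 isT.
Definition o2 : A := @Ordinal 3 2 isT.
Definition j0 : 'I_4 := @Ordinal 4 0 isT.
Definition j1 : 'I_4 := @Ordinal 4 1 isT.
Definition j2 : 'I_4 := @Ordinal 4 2 isT.
Definition j3 : 'I_4 := @Ordinal 4 3 isT.

Lemma A_cases (x : A) : x = o0 \/ x = o1 \/ x = o2.
Proof.
case: x => -[|[|[|k]]] H; [left|right;left|right;right|by []]; exact: val_inj.
Qed.
Lemma I4_cases (x : 'I_4) : x = j0 \/ x = j1 \/ x = j2 \/ x = j3.
Proof.
case: x => -[|[|[|[|k]]]] H; [left|right;left|right;right;left|right;right;right|by []];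
 exact: val_inj.
Qed.
Lemma aA0 : aA 0 = o0. Proof. by apply: val_inj; rewrite /aA /= inordK. Qed.
Lemma aA1 : aA 1 = o1. Proof. by apply: val_inj; rewrite /aA /= inordK. Qed.
Lemma aA2 : aA 2 = o2. Proof. by apply: val_inj; rewrite /aA /= inordK. Qed.
Lemma in0 : @inord 3 0 = j0. Proof. by apply: val_inj; rewrite /= inordK. Qed.
Lemma in1 : @inord 3 1 = j1. Proof. by apply: val_inj; rewrite /= inordK. Qed.
Lemma in2 : @inord 3 2 = j2. Proof. by apply: val_inj; rewrite /= inordK. Qed.
Lemma in3 : @inord 3 3 = j3. Proof. by apply: val_inj; rewrite /= inordK. Qed.

Lemma valA (x : A) : val x \in l3.
Proof. by case: (A_cases x) => [->|[->|->]]. Qed.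
Lemma l3P k : k \in l3 -> k < 3.
Proof. by rewrite !inE => /or3P[]/eqP->. Qed.

Definition tab (g : binop) : seq nat :=
  [:: val (g (o0, o0)); val (g (o0, o1)); val (g (o0, o2));
      val (g (o1, o0)); val (g (o1, o1)); val (g (o1, o2));
      val (g (o2, o0)); val (g (o2, o1)); val (g (o2, o2))].

Lemma tab_gt (g : binop) (x y : A) : val (g (x, y)) = gt (tab g) (val x) (val y).
Proof. by case: (A_cases x) => [->|[->|->]]; case: (A_cases y) => [->|[->|->]]. Qed.

Lemma tab_inj : injective tab.
Proof. move=> g h E; apply/ffunP => -[x y]; apply: val_inj; by rewrite !tab_gt E. Qed.

Lemma tab_L9 (g : binop) : tab g \in L9.
Proof. by rewrite mem_allseqs /= !valA. Qed.

Lemma Tnat_eq a b c d :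
  (if ((a, b, c, d) == (1, 1, 2, 2)) || ((a, b, c, d) == (1, 2, 1, 2)) then 1 else 0)
  = Tnat a b c d.
Proof.
by case: a => [|[|[|a]]]; case: b => [|[|[|b]]]; case: c => [|[|[|c]]]; case: d => [|[|[|d]]].
Qed.

Lemma Tval (v : {ffun 'I_4 -> A}) : val (T v) = Tnat (val (v j0)) (val (v j1)) (val (v j2)) (val (v j3)).
Proof.
rewrite /T in0 in1 in2 in3 -Tnat_eq.
by case: ifP; rewrite ?aA0 ?aA1.
Qed.

Lemma starP (g : binop) : in_starT2 g <-> CommB (tab g).
Proof.
split.
- move=> H.
  apply/allP => a0 H0; apply/allP => a1 H1; apply/allP => a2 H2; apply/allP => a3 H3.
  apply/allP => b0 K0; apply/allP => b1 K1; apply/allP => b2 K2; apply/allP => b3 K3.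
  pose x (i : 'I_2) (j : 'I_4) : A :=
    if i == ord0 then inord (nth 0 [:: a0; a1; a2; a3] j)
    else inord (nth 0 [:: b0; b1; b2; b3] j).
  have E := congr1 val (H x).
  move: E; rewrite /op_of2 !ffunE !tab_gt !Tval !ffunE !tab_gt /x /= !inordK ?l3P //.
  by move=> E; rewrite /chkN E.
- move=> H x; apply: val_inj.
  rewrite /op_of2 !ffunE !tab_gt !Tval !ffunE !tab_gt.
  move/allP: H => /(_ _ (valA (x ord0 j0)))/allP/(_ _ (valA (x ord0 j1)))
    /allP/(_ _ (valA (x ord0 j2)))/allP/(_ _ (valA (x ord0 j3)))
    /allP/(_ _ (valA (x ord_max j0)))/allP/(_ _ (valA (x ord_max j1)))
    /allP/(_ _ (valA (x ord_max j2)))/allP/(_ _ (valA (x ord_max j3))).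
  by move/eqP.
Qed.

Lemma tab_e21 : tab e21 = [:: 0;0;0;1;1;1;2;2;2].
Proof. by rewrite /tab !ffunE. Qed.
Lemma tab_e22 : tab e22 = [:: 0;1;2;0;1;2;0;1;2].
Proof. by rewrite /tab !ffunE. Qed.
Lemma tab_z a : tab (z a) = [:: 0;0;0;0;0;0;0;0; val a].
Proof. by rewrite /tab !ffunE /= aA0. Qed.
Lemma tab_f a xs : tab (f a xs) =
  [:: 0; 0; val (xs j0); 0; 0; val (xs j1); val (xs j2); val (xs j3); val a].
Proof. by rewrite /tab !ffunE /= aA0 in0 in1 in2 in3. Qed.

Lemma M1 g : (g \in [set e21; e22]) = Lp (tab g).
Proof.
by rewrite !inE /Lp !inE -tab_e21 -tab_e22 !(inj_eq tab_inj).
Qed.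

Lemma M2 g : (g \in [set z a | a : A]) = Lz (tab g).
Proof.
apply/imsetP/mapP => [[a _ ->]|[k Hk E]].
  by exists (val a); rewrite ?valA // tab_z.
exists (inord k) => //; apply: tab_inj; by rewrite E tab_z /= inordK ?l3P.
Qed.

Definition lA := [:: o0; o1; o2].
Lemma memA (x : A) : x \in lA.
Proof. by case: (A_cases x) => [->|[->|->]]. Qed.

Lemma Fchk : all (fun c => all (fun a => all (fun v0 => all (fun v1 => all (fun v2 =>
  all (fun v3 =>
   ((a == o0) || (a == c)) ==> ((v0 == o0) || (v0 == c)) ==> ((v1 == o0) || (v1 == c))
   ==> ((v2 == o0) || (v2 == c)) ==> ((v3 == o0) || (v3 == c))
   ==> ~~ [&& v0 == o0, v1 == o0, v2 == o0 & v3 == o0]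
   ==> Lf [:: 0; 0; val v0; 0; 0; val v1; val v2; val v3; val a]) lA) lA) lA) lA) lA)
  [:: o1; o2].
Proof. vm_compute. reflexivity. Qed.

Lemma M3 g : (g \in fam_f) = Lf (tab g).
Proof.
apply/idP/idP.
- move/bigcupP => [c Hc /imset2P [a xs Ha Hxs ->]].
  rewrite tab_f.
  move: Hc; rewrite !inE aA1 aA2 => Hc.
  move: Ha; rewrite !inE aA0 => Ha.
  move: Hxs; rewrite inE => /andP [/forallP Hx Hnz].
  have Hnz' : ~~ [&& xs j0 == o0, xs j1 == o0, xs j2 == o0 & xs j3 == o0].
    apply: contra Hnz => /and4P [/eqP e0 /eqP e1 /eqP e2 /eqP e3].
    apply/eqP/ffunP => i; rewrite ffunE aA0.
    by case: (I4_cases i) => [->|[->|[->|->]]].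
  have X0 := Hx j0; have X1 := Hx j1; have X2 := Hx j2; have X3 := Hx j3.
  rewrite !inE aA0 in X0 X1 X2 X3.
  have Hc' : c \in [:: o1; o2] by rewrite !inE.
  move/allP: Fchk => /(_ c Hc')/allP/(_ a (memA a))/allP/(_ _ (memA (xs j0)))
    /allP/(_ _ (memA (xs j1)))/allP/(_ _ (memA (xs j2)))/allP/(_ _ (memA (xs j3))).
  by rewrite Ha X0 X1 X2 X3 Hnz'.
- move=> H.
  pose a := g (o2, o2).
  pose xs : {ffun 'I_4 -> A} :=
    [ffun i : 'I_4 => g (nth (o0, o0) [:: (o0, o2); (o1, o2); (o2, o0); (o2, o1)] (val i))].
  have Eg : g = f a xs.
    apply: tab_inj; rewrite tab_f /xs !ffunE /=.
    move: H; rewrite /tab /Lf.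
    by move=> /and5P [/eqP-> /eqP-> /eqP-> /eqP-> _].
  move: H; rewrite Eg tab_f /Lf => /and5P [_ _ _ _ H].
  have Hxs0 : xs != [ffun=> aA 0].
    apply/negP => /eqP E; move: H; rewrite E !ffunE aA0 /=.
    by rewrite /Pc /= !andbF.
  apply/bigcupP.
  case/orP: H => /andP [/and5P [Ha H0 H1 H2 H3] _].
  + exists (aA 1); first by rewrite !inE eqxx.
    apply/imset2P; apply: (Imset2spec (x1 := a) (x2 := xs)) => //.
      by rewrite !inE aA0 aA1 -!val_eqE.
    rewrite inE Hxs0 andbT; apply/forallP => i.
    rewrite !inE aA0 aA1 -!val_eqE /=.
    case: (I4_cases i) => [->|[->|[->|->]]]; [exact: H0|exact: H1|exact: H2|by move: H3; rewrite andbT].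
  + exists (aA 2); first by rewrite !inE eqxx orbT.
    apply/imset2P; apply: (Imset2spec (x1 := a) (x2 := xs)) => //.
      by rewrite !inE aA0 aA2 -!val_eqE.
    rewrite inE Hxs0 andbT; apply/forallP => i.
    rewrite !inE aA0 aA2 -!val_eqE /=.
    case: (I4_cases i) => [->|[->|[->|->]]]; [exact: H0|exact: H1|exact: H2|by move: H3; rewrite andbT].
Qed.

Definition untab (t : seq nat) : binop :=
  [ffun p : A * A => inord (gt t (val p.1) (val p.2))].

Lemma tab_untab t : t \in L9 -> tab (untab t) = t.
Proof.
rewrite mem_allseqs.
case: t => [|t0 [|t1 [|t2 [|t3 [|t4 [|t5 [|t6 [|t7 [|t8 [|? ?]]]]]]]]]] //.
move=> /andP[_ Hall].
have HH k : k \in [:: t0; t1; t2; t3; t4; t5; t6; t7; t8] -> k < 3.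
  by move=> Hk; apply: l3P; exact: (allP Hall).
rewrite /tab !ffunE /= !inordK //; apply: HH; rewrite !inE eqxx ?orbT //.
Qed.

Lemma card_tab (P : pred (seq nat)) : #|[pred g : binop | P (tab g)]| = count P L9.
Proof.
rewrite cardE /enum_mem size_filter.
have -> : count (mem [pred g : binop | P (tab g)]) (Finite.enum binop)
          = count P (map tab (Finite.enum binop)).
  by rewrite count_map; apply: eq_count.
have Hp : perm_eq (map tab (Finite.enum binop)) L9.
  apply: uniq_perm.
  - rewrite (map_inj_uniq tab_inj) -enumT; exact: enum_uniq.
  - exact: uniq_allseqs.
  - move=> t; apply/mapP/idP => [[g _ ->]|Ht]; first exact: tab_L9.
    exists (untab t); first by rewrite -enumT mem_enum.
    by rewrite tab_untab.
by move/permP: Hp => ->.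
Qed.


Lemma CommB_chk t a0 a1 a2 a3 b0 b1 b2 b3 : CommB t ->
  a0 \in l3 -> a1 \in l3 -> a2 \in l3 -> a3 \in l3 ->
  b0 \in l3 -> b1 \in l3 -> b2 \in l3 -> b3 \in l3 -> chkN t a0 a1 a2 a3 b0 b1 b2 b3.
Proof.
move=> H h0 h1 h2 h3 k0 k1 k2 k3.
by move/allP: H => /(_ _ h0)/allP/(_ _ h1)/allP/(_ _ h2)/allP/(_ _ h3)
  /allP/(_ _ k0)/allP/(_ _ k1)/allP/(_ _ k2)/allP/(_ _ k3).
Qed.

Theorem lemma3p4 :
  (forall g : binop, in_starT2 g <-> g \in listed)
  /\ #|[set e21; e22]| = 2 /\ #|[set z a | a : A]| = 3 /\ #|fam_f| = 60
  /\ [disjoint [set e21; e22] & [set z a | a : A]]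
  /\ [disjoint [set e21; e22] :|: [set z a | a : A] & fam_f]
  /\ #|listed| = 65.
Proof.
have Mall g : (g \in listed) = Lst (tab g).
  by rewrite /listed in_setU M3 in_setU M1 M2 /Lst orbA.
have Mall2 g : (g \in [set e21; e22] :|: [set z a | a : A]) = Lp (tab g) || Lz (tab g).
  by rewrite in_setU M1 M2.
have cardP (S : {set binop}) (P : pred (seq nat)) :
    (forall g, (g \in S) = P (tab g)) -> #|S| = count P L9.
  by move=> HS; rewrite -card_tab; apply: eq_card => g; rewrite HS.
case: cnts => c1 c2 c3 c4.
split.
  move=> g; rewrite Mall.
  suff -> : Lst (tab g) = CommB (tab g) by exact: starP.
  move/allP: big => /(_ _ (tab_L9 g)).
  case: ifP => Hq; first by move/eqP.
  move/negbTE => ->; apply/esym/negbTE; apply: contra (negbT Hq) => Hc.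
  by rewrite /quick /= !(CommB_chk Hc).
split; first by rewrite (cardP _ _ M1).
split; first by rewrite (cardP _ _ M2).
split; first by rewrite (cardP _ _ M3).
have D g := allP disj _ (tab_L9 g).
split.
  rewrite disjoint_subset; apply/subsetP => g; rewrite M1 inE /= M2 => H1.
  by move: (D g); rewrite H1 /= => /andP[].
split.
  rewrite disjoint_subset; apply/subsetP => g; rewrite Mall2 inE /= M3 => H1.
  by move: (D g); rewrite H1 /= => /andP[].
by rewrite (cardP _ _ Mall).
Qed.
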